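(* Under the standing hypotheses (S), for every $\xi\in\mathbb H$ and $n\ge0$, \[\frac1{2\tau}\Big(\|\xi-X_{n+1}^\tau\|^2_{\mathbb H}-\|\xi-X_n^\tau\|^2_{\mathbb H}\Big)+\frac\lambda4\Big(\|\xi-X_n^\tau\|^2_{\mathbb H}+\|\xi-X_{n+1}^\tau\|^2_{\mathbb H}\Big)\] \[\le\phi^{\#}_{\rho_0}(\xi)-\phi^{\#}_{\rho_0}(X_{n+1}^\tau)+\frac\tau4\Big(\|\nabla\phi^{\#}_{\rho_0}(X_n^\tau)\|^2_{\mathbb H}-\|\nabla\phi^{\#}_{\rho_0}(X_{n+1}^\tau)\|^2_{\mathbb H}\Big)-\Big(\frac1{2\tau}+\frac\lambda4\Big)\|X_n^\tau-X_{n+1}^\tau\|^2_{\mathbb H}.\]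
   Context: Standing hypotheses (S): $\rho_0\in\mathcal P_2(\mathbb R^d)$; $\mathbb H=L^2(\mathbb R^d;\rho_0)$ is the Hilbert space of $\rho_0$-square-integrable maps $\mathbb R^d\to\mathbb R^d$ with $\langle\xi_1,\xi_2\rangle_{\mathbb H}=\int\langle\xi_1,\xi_2\rangle d\rho_0$; $\phi:\mathcal P_2(\mathbb R^d)\to\mathbb R$ has lift $\phi^{\#}_{\rho_0}(\xi):=\phi(\xi_{\#}\rho_0)$ which is Fréchet differentiable on $\mathbb H$ (gradient $\nabla\phi^{\#}_{\rho_0}$), $\lambda$-convex on $\mathbb H$ for some $\lambda\in\mathbb R$ (i.e. $\phi^{\#}_{\rho_0}((1-t)\xi_1+t\xi_2)\le(1-t)\phi^{\#}_{\rho_0}(\xi_1)+t\phi^{\#}_{\rho_0}(\xi_2)-\frac\lambda2t(1-t)\|\xi_1-\xi_2\|_{\mathbb H}^2$), and $\inf_{\mathbb H}\phi^{\#}_{\rho_0}>-\infty$; the time step $\tau>0$ satisfies $\lambda/2+1/\tau>0$; $X_0^\tau\in\mathbb H$. Lagrangian trapezoidal scheme: $X_{n+1}^\tau$ is the (unique) minimizer over $\xi\in\mathbb H$ of $\tfrac12\phi^{\#}_{\rho_0}(\xi)+\tfrac12\langle\nabla\phi^{\#}_{\rho_0}(X_n^\tau),\xi\rangle_{\mathbb H}+\tfrac1{2\tau}\|\xi-X_n^\tau\|^2_{\mathbb H}$; equivalently $X_{n+1}^\tau=X_n^\tau-\frac\tau2\big(\nabla\phi^{\#}_{\rho_0}(X_{n+1}^\tau)+\nabla\phi^{\#}_{\rho_0}(X_n^\tau)\big)$.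 *)

(* Defs.v *)
From HB Require Import structures.
From mathcomp Require Import all_boot all_order all_algebra.
From mathcomp Require Import reals.
Set Implicit Arguments. Unset Strict Implicit. Unset Printing Implicit Defensive.
Import Order.TTheory GRing.Theory Num.Theory.
Local Open Scope ring_scope.

(* A real inner-product (pre-Hilbert) space: an R-module V with a symmetric,
   bilinear, positive definite form ip.  The space H = L^2(R^d; rho_0) of the
   paper is an instance. *)
Record inner_product (R : realType) (V : lmodType R) (ip : V -> V -> R) : Prop :=
  InnerProduct {
    ip_sym : forall u v, ip u v = ip v u;
    ip_linl : forall (a : R) (u v w : V), ip (a *: u + v) w = a * ip u w + ip v w;
    ip_ge0 : forall u, 0 <= ip u u;
    ip_eq0 : forall u, ip u u = 0 -> u = 0 }.

Definition hnorm (R : realType) (V : lmodType R) (ip : V -> V -> R) (u : V) : R :=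
  Num.sqrt (ip u u).

Definition frechet_gradient (R : realType) (V : lmodType R) (ip : V -> V -> R)
  (f : V -> R) (g : V -> V) : Prop :=
  forall (x : V) (eps : R), 0 < eps -> exists2 delta : R, 0 < delta &
    forall h : V, hnorm ip h < delta ->
      `| f (x + h) - f x - ip (g x) h | <= eps * hnorm ip h.

Definition lambda_convex (R : realType) (V : lmodType R) (ip : V -> V -> R)
  (lam : R) (f : V -> R) : Prop :=
  forall (x1 x2 : V) (t : R), 0 <= t -> t <= 1 ->
    f ((1 - t) *: x1 + t *: x2) <=
      (1 - t) * f x1 + t * f x2 - lam / 2 * t * (1 - t) * hnorm ip (x1 - x2) ^+ 2.

Definition trap_functional (R : realType) (V : lmodType R) (ip : V -> V -> R)
  (f : V -> R) (g : V -> V) (tau : R) (Xn xi : V) : R :=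
  1 / 2 * f xi + 1 / 2 * ip (g Xn) xi + 1 / (2 * tau) * hnorm ip (xi - Xn) ^+ 2.

Definition trapezoidal_scheme (R : realType) (V : lmodType R) (ip : V -> V -> R)
  (f : V -> R) (g : V -> V) (tau : R) (X : nat -> V) : Prop :=
  forall (n : nat) (xi : V),
    trap_functional ip f g tau (X n) (X n.+1) <= trap_functional ip f g tau (X n) xi.

(* Main.v *)
Require Import Defs.
From HB Require Import structures.
From mathcomp Require Import all_boot all_order all_algebra.
From mathcomp Require Import reals lra.
Import Order.TTheory GRing.Theory Num.Theory.
Local Open Scope ring_scope.

Lemma ip0l (R : realType) (H : lmodType R) (ip : H -> H -> R) :
  inner_product ip -> forall w, ip 0 w = 0.
Proof.
move=> Hip w; have := ip_linl Hip 1 0 0 w.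
rewrite scale1r addr0 mul1r => E; lra.
Qed.

Lemma ipDl (R : realType) (H : lmodType R) (ip : H -> H -> R) :
  inner_product ip -> forall u v w, ip (u + v) w = ip u w + ip v w.
Proof. by move=> Hip u v w; rewrite -{1}[u]scale1r ip_linl // mul1r. Qed.

Lemma ipZl (R : realType) (H : lmodType R) (ip : H -> H -> R) :
  inner_product ip -> forall a u w, ip (a *: u) w = a * ip u w.
Proof. by move=> Hip a u w; rewrite -[a *: u]addr0 ip_linl // ip0l // addr0. Qed.

Lemma ipNl (R : realType) (H : lmodType R) (ip : H -> H -> R) :
  inner_product ip -> forall u w, ip (- u) w = - ip u w.
Proof. by move=> Hip u w; rewrite -scaleN1r ipZl // mulN1r. Qed.

Lemma ipBl (R : realType) (H : lmodType R) (ip : H -> H -> R) :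
  inner_product ip -> forall u v w, ip (u - v) w = ip u w - ip v w.
Proof. by move=> Hip u v w; rewrite ipDl // ipNl. Qed.

Lemma ipDr (R : realType) (H : lmodType R) (ip : H -> H -> R) :
  inner_product ip -> forall u v w, ip w (u + v) = ip w u + ip w v.
Proof. by move=> Hip u v w; rewrite !(ip_sym Hip w) ipDl. Qed.

Lemma ipZr (R : realType) (H : lmodType R) (ip : H -> H -> R) :
  inner_product ip -> forall a u w, ip w (a *: u) = a * ip w u.
Proof. by move=> Hip a u w; rewrite !(ip_sym Hip w) ipZl. Qed.

Lemma ipNr (R : realType) (H : lmodType R) (ip : H -> H -> R) :
  inner_product ip -> forall u w, ip w (- u) = - ip w u.
Proof. by move=> Hip u w; rewrite !(ip_sym Hip w) ipNl. Qed.

Lemma ipBr (R : realType) (H : lmodType R) (ip : H -> H -> R) :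
  inner_product ip -> forall u v w, ip w (u - v) = ip w u - ip w v.
Proof. by move=> Hip u v w; rewrite ipDr // ipNr. Qed.

Lemma hnorm_sq (R : realType) (H : lmodType R) (ip : H -> H -> R) :
  inner_product ip -> forall u, hnorm ip u ^+ 2 = ip u u.
Proof. by move=> Hip u; rewrite /hnorm sqr_sqrtr // ip_ge0. Qed.

Lemma hnorm_ge0 (R : realType) (H : lmodType R) (ip : H -> H -> R) u :
  0 <= hnorm ip u.
Proof. exact: sqrtr_ge0. Qed.

Lemma hnormZ (R : realType) (H : lmodType R) (ip : H -> H -> R) :
  inner_product ip -> forall (t : R) u, hnorm ip (t *: u) = `|t| * hnorm ip u.
Proof.
move=> Hip t u; rewrite /hnorm ipZl // ipZr // mulrA -expr2 sqrtrM ?sqrtr_sqr //.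
exact: sqr_ge0.
Qed.

Lemma small_t (R : realType) {A B : R} : 0 < A -> 0 < B ->
  exists t : R, [/\ 0 < t, t <= 1, t <= A & t <= B].
Proof.
move=> A0 B0; exists (Num.min 1 (Num.min A B)).
rewrite !lt_min !ge_min !lexx A0 B0 ltr01 /= !orbT; split=> //.
Qed.

Lemma le_all_pos (R : realType) (c : R) : (forall e, 0 < e -> c <= e) -> c <= 0.
Proof.
move=> He; rewrite leNgt; apply/negP => c0.
have := He (c / 2); rewrite divr_gt0 // => /(_ isT); lra.
Qed.

Lemma quot_ex (R : realType) (a b : R) : 0 < a -> 0 < b ->
  exists c : R, 0 < c /\ c * b = a.
Proof.
move=> a0 b0; exists (a / b); split; first by rewrite divr_gt0.
by rewrite mulfVK // gt_eqF.
Qed.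

Lemma GI (R : realType) (H : lmodType R) (ip : H -> H -> R)
  (phi : H -> R) (g : H -> H) (lam : R) :
  inner_product ip -> frechet_gradient ip phi g -> lambda_convex ip lam phi ->
  forall x y, ip (g x) (y - x) <= phi y - phi x - lam / 2 * ip (y - x) (y - x).
Proof.
move=> Hip Hf Hc x y.
set h := y - x.
set N := hnorm ip h.
set K := ip h h.
have N0 : 0 <= N by exact: hnorm_ge0.
have K0 : 0 <= K by exact: ip_ge0.
have l0 := normr_ge0 lam.
rewrite -subr_le0; apply: le_all_pos => e e0.
have [eps [eps0 Eeps]] := @quot_ex R e (2 * (N + 1)) e0 ltac:(lra).
have [delta d0 Hd] := Hf x eps eps0.
have [A [A0 EA]] := @quot_ex R delta (2 * (N + 1)) d0 ltac:(lra).
have [B [B0 EB]] := @quot_ex R e (2 * (`|lam| * K + 1)) e0 ltac:(nra).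
have [t [t0 t1 tA tB]] := @small_t R _ _ A0 B0.
have tN : hnorm ip (t *: h) < delta.
  rewrite hnormZ // ger0_norm; last lra.
  rewrite -/N. nra.
have := Hd _ tN; rewrite hnormZ // (ger0_norm (ltW t0)) -/N.
rewrite ipZr // => Hfr.
have Hcv := Hc x y t (ltW t0) t1.
have Ev : (1 - t) *: x + t *: y = x + t *: h.
  by rewrite /h scalerBl scale1r scalerBr addrA addrAC.
rewrite Ev in Hcv.
have EK : hnorm ip (x - y) ^+ 2 = K.
  by rewrite hnorm_sq // /K /h -opprB ipNl // ipNr // opprK.
rewrite EK in Hcv.
move: Hfr => /ler_normlP [Hfr1 Hfr2].
have ll := ler_norm lam.
have lK : lam * K <= `|lam| * K by nra.
suff : t * (ip (g x) h - (phi y - phi x - lam / 2 * K)) <= t * e by rewrite ler_pM2l.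
have et : 0 <= eps * t by nra.
have f1 : eps * (t * N) <= t * e / 2.
  rewrite -Eeps; nra.
have tB2 : t * (2 * (`|lam| * K + 1)) <= e.
  rewrite -EB; apply: ler_wpM2r => //; nra.
have f3 : t * (`|lam| * K) <= e / 2 by nra.
have f4 : t * (lam * K) <= t * (`|lam| * K) by apply: ler_wpM2l => //; lra.
have f5 : t * (t * (lam * K)) <= t * (e / 2) by apply: ler_wpM2l => //; lra.
nra.
Qed.

Lemma EL (R : realType) (H : lmodType R) (ip : H -> H -> R)
  (phi : H -> R) (g : H -> H) (tau : R) (Xn Y : H) :
  inner_product ip -> frechet_gradient ip phi g -> 0 < tau ->
  (forall xi, trap_functional ip phi g tau Xn Y <= trap_functional ip phi g tau Xn xi) ->
  g Y + (g Xn + (2 / tau) *: (Y - Xn)) = 0.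
Proof.
move=> Hip Hf tau0 Hs.
set v := g Y + _.
apply: (ip_eq0 Hip); apply/le_anti; rewrite (ip_ge0 Hip v) andbT.
set h := - v.
set N := hnorm ip h.
set K := ip v v.
have KE : ip h h = K by rewrite /h ipNl // ipNr // opprK.
have N0 : 0 <= N by exact: hnorm_ge0.
have K0 : 0 <= K by exact: ip_ge0.
set s := tau^-1.
have s0 : 0 < s by rewrite invr_gt0.
have E1 : 1 / (2 * tau) = s / 2 by rewrite /s invfM mul1r mulrC.
have E2 : 2 / tau = 2 * s by [].
apply: le_all_pos => e e0.
have [eps [eps0 Eeps]] := @quot_ex R e (2 * (N + 1)) e0 ltac:(lra).
have [delta d0 Hd] := Hf Y eps eps0.
have [A [A0 EA]] := @quot_ex R delta (2 * (N + 1)) d0 ltac:(lra).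
have [B [B0 EB]] := @quot_ex R e (2 * (K + 1) * s) e0 ltac:(nra).
have [t [t0 t1 tA tB]] := @small_t R _ _ A0 B0.
have tN : hnorm ip (t *: h) < delta.
  rewrite hnormZ // ger0_norm; last lra.
  rewrite -/N. nra.
have := Hd _ tN; rewrite hnormZ // (ger0_norm (ltW t0)) -/N.
rewrite ipZr // => /ler_normlP [_ Hfr2].
have Hm := Hs (Y + t *: h).
rewrite /trap_functional !hnorm_sq // E1 in Hm.
have Ed : Y + t *: h - Xn = (Y - Xn) + t *: h by rewrite addrAC.
rewrite Ed in Hm.
set d := Y - Xn in Hm *.
rewrite !(@ipDl _ _ _ Hip, @ipDr _ _ _ Hip, @ipZl _ _ _ Hip, @ipZr _ _ _ Hip) KE in Hm.
rewrite (ip_sym Hip h Y) (ip_sym Hip h (- Xn)) in Hm.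
have Iv : ip v h = - K by rewrite /h ipNr.
rewrite {1}/v E2 !(@ipDl _ _ _ Hip, @ipZl _ _ _ Hip) in Iv.
have Ivt := congr1 (fun z => t * z) Iv; simpl in Ivt.
have key : 0 <= t * (- K + eps * N + t * K * s) by lra.
have key2 : K <= eps * N + t * K * s.
  by move: key; rewrite pmulr_rge0 //; lra.
have f1 : eps * N <= e / 2 by rewrite -Eeps; nra.
have tB2 : t * (2 * (K + 1) * s) <= e.
  by rewrite -EB; apply: ler_wpM2r => //; nra.
have f2 : t * K * s <= e / 2 by nra.
lra.
Qed.

Theorem mainTheorem9 (R : realType) (H : lmodType R) (ip : H -> H -> R)
  (phi : H -> R) (gphi : H -> H) (lam tau : R) (X : nat -> H) :
  inner_product ip ->
  frechet_gradient ip phi gphi ->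
  lambda_convex ip lam phi ->
  (exists m : R, forall xi : H, m <= phi xi) ->
  0 < tau -> 0 < lam / 2 + 1 / tau ->
  trapezoidal_scheme ip phi gphi tau X ->
  forall (xi : H) (n : nat),
    1 / (2 * tau) * (hnorm ip (xi - X n.+1) ^+ 2 - hnorm ip (xi - X n) ^+ 2)
    + lam / 4 * (hnorm ip (xi - X n) ^+ 2 + hnorm ip (xi - X n.+1) ^+ 2)
    <= phi xi - phi (X n.+1)
       + tau / 4 * (hnorm ip (gphi (X n)) ^+ 2 - hnorm ip (gphi (X n.+1)) ^+ 2)
       - (1 / (2 * tau) + lam / 4) * hnorm ip (X n - X n.+1) ^+ 2.
Proof.
move=> Hip Hf Hc _ tau0 _ Hs xi n.
have EL0 := @EL _ _ _ _ _ _ _ _ Hip Hf tau0 (Hs n).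
have G1 := @GI _ _ _ _ _ _ Hip Hf Hc (X n.+1) xi.
have G2 := @GI _ _ _ _ _ _ Hip Hf Hc (X n) xi.
have G3 := @GI _ _ _ _ _ _ Hip Hf Hc (X n.+1) (X n).
move: EL0 G1 G2 G3.
rewrite !(@hnorm_sq _ _ _ Hip).
set a := gphi (X n).
set b := gphi (X n.+1).
move=> /eqP; rewrite addr_eq0 => /eqP ->.
have -> : xi - X n.+1 = (xi - X n) - (X n.+1 - X n).
  by rewrite opprB addrA subrK.
have -> : X n - X n.+1 = - (X n.+1 - X n) by rewrite opprB.
set e1 := xi - X n.
set e2 := X n.+1 - X n.
clearbody e1 e2.
set s := tau^-1.
have E1 : 1 / (2 * tau) = s / 2 by rewrite /s invfM mul1r mulrC.
have E2 : 2 / tau = 2 * s by [].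
have ts : tau * s = 1 by rewrite /s mulfV // gt_eqF.
rewrite E1.
rewrite !(@ipDl _ _ _ Hip, @ipDr _ _ _ Hip, @ipZl _ _ _ Hip, @ipZr _ _ _ Hip,
  @ipNl _ _ _ Hip, @ipNr _ _ _ Hip).
rewrite ?(ip_sym Hip e2 e1) ?(ip_sym Hip a e1) ?(ip_sym Hip a e2).
move=> G1 G2 G3.
have F1 : tau * s * ip e2 a = ip e2 a by rewrite ts mul1r.
have F2 : tau * s * (s * ip e2 e2) = s * ip e2 e2 by rewrite ts mul1r.
lra.
Qed.
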